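(* Assume a geometry $(\mathscr P,\mathscr L)$ satisfying axioms G1, G2, G3, L1, L2. Let $P$ be any point and $l$ any line. If $\neg(P\notin l)$, then $P\in l$.
   Context: Constructive setting: all reasoning is in Bishop-style constructive mathematics with intuitionistic logic (no law of excluded middle; a statement ''A or B'' requires a procedure deciding which holds, and existence requires a construction). A geometry $(\mathscr P,\mathscr L)$ consists of a set $\mathscr P$ of points with an equality relation, a set $\mathscr L$ of lines, each line being a subset of $\mathscr P$ (lines are equal iff equal as subsets), and a primitive relation $P\ne Q$ (''distinct points'') on $\mathscr P$, invariant under equality, such that: (c1) $\neg(P\ne P)$; (c2) $P\ne Q$ implies $Q\ne P$; (c3) if $P\ne Q$ then every point $R$ satisfies $R\ne P$ or $R\ne Q$; (c4) $\neg(P\ne Q)$ implies $P=Q$. (The relation $P\ne Q$ is affirmative, not merely the negation of equality.) A point $P$ lies outside a line $l$, written $P\notin l$, if $P\ne Q$ for every $Q\in l$. Lines are distinct, $l\ne m$, if some point of $l$ lies outside $m$ or some point of $m$ lies outside $l$. Lines are nonparallel, $l\nparallel m$, if $l\ne m$ and a point of $l\cap m$ can be exhibited; they are parallel, $l\parallel m$, if $\neg(l\nparallel m)$. Nonparallel lines have a unique common point, denoted $l\cap m$. Axioms: (G1) for distinct points $P,Q$ there is a unique line, denoted $P+Q$, containing both; (G2) for any point $P$ and line $l$ there is a unique line through $P$ parallel to $l$; (G3) there exist distinct points $A,B,C$ with $C\notin A+B$; (L1) if $l\nparallel m$, $P=l\cap m$, and $Q\ne P$, then $Q\notin l$ or $Q\notin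 m$; (L2) if $l\nparallel m$, then every line $n$ satisfies $n\nparallel l$ or $n\nparallel m$. *)

(* Defs.v *)
(* Points: a type Pt with (Leibniz) equality and a primitive
   apartness relation [dist] ("distinct points", P != Q).
   Lines: a collection of subsets of Pt, given by [isLine : (Pt -> Prop) -> Prop];
   equality of lines is equality as subsets ([leq]). *)

Section Geometry.
Variables (Pt : Type) (isLine : (Pt -> Prop) -> Prop) (dist : Pt -> Pt -> Prop).

Definition outside (P : Pt) (l : Pt -> Prop) : Prop := forall Q, l Q -> dist P Q.

Definition leq (l m : Pt -> Prop) : Prop := forall P, l P <-> m P.

Definition ldist (l m : Pt -> Prop) : Prop :=
  (exists P, l P /\ outside P m) \/ (exists P, m P /\ outside P l).

Definition nonpar (l m : Pt -> Prop) : Prop :=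
  ldist l m /\ exists P, l P /\ m P.

Definition par (l m : Pt -> Prop) : Prop := ~ nonpar l m.

Record geometry_axioms : Prop := {
  (* the set of lines is a set of subsets: closed under subset equality *)
  line_ext : forall l m, isLine l -> leq l m -> isLine m;
  c1 : forall P, ~ dist P P;
  c2 : forall P Q, dist P Q -> dist Q P;
  c3 : forall P Q, dist P Q -> forall R, dist R P \/ dist R Q;
  c4 : forall P Q, ~ dist P Q -> P = Q;
  G1 : forall P Q, dist P Q ->
         exists l, isLine l /\ l P /\ l Q /\
           forall m, isLine m -> m P -> m Q -> leq m l;
  G2 : forall P l, isLine l ->
         exists m, isLine m /\ m P /\ par m l /\
           forall m', isLine m' -> m' P -> par m' l -> leq m' m;
  G3 : exists A B C, dist A B /\ dist A C /\ dist B C /\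
         exists l, isLine l /\ l A /\ l B /\ outside C l;
  L1 : forall l m P Q, isLine l -> isLine m -> nonpar l m ->
         l P -> m P -> dist Q P -> outside Q l \/ outside Q m;
  L2 : forall l m n, isLine l -> isLine m -> isLine n -> nonpar l m ->
         nonpar n l \/ nonpar n m
}.

End Geometry.

(* Main.v *)
Require Import Defs.

Theorem theorem2p12 (Pt : Type) (isLine : (Pt -> Prop) -> Prop)
  (dist : Pt -> Pt -> Prop) (H : geometry_axioms Pt isLine dist)
  (P : Pt) (l : Pt -> Prop) (Hl : isLine l) :
  ~ outside Pt dist P l -> l P.
Proof.
  intros Hno.
  destruct H as [_ c1 c2 c3 c4 G1 G2 G3 L1 L2].
  destruct G3 as [A [B [C [dAB [dAC [dBC [l0 [Hl0 [l0A [l0B oC]]]]]]]]]].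
  destruct (G1 C A (c2 _ _ dAC)) as [k1 [Hk1 [k1C [k1A _]]]].
  assert (N1 : nonpar Pt dist k1 l0).
  { split. left. exists C. split; assumption. exists A. split; assumption. }
  assert (Hk : exists k, isLine k /\ nonpar Pt dist l k).
  { destruct (L2 k1 l0 l Hk1 Hl0 Hl N1) as [N|N]; eauto. }
  destruct Hk as [k [Hk Nlk]].
  destruct (G2 P k Hk) as [m [Hm [mP [pmk _]]]].
  destruct (L2 l k m Hl Hk Hm Nlk) as [Nml|Nmk]; [|exfalso; exact (pmk Nmk)].
  pose proof Nml as Nml'.
  destruct Nml' as [_ [R [mR lR]]].
  assert (E : P = R).
  { apply c4. intro d.
    destruct (L1 m l R P Hm Hl Nml mR lR d) as [o|o].
    - exact (c1 P (o P mP)).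
    - exact (Hno o). }
  subst R. exact lR.
Qed.
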